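(* Let $\Bbbk$ be a field, $n\ge2$, $q\in\Bbbk$ a primitive $n$-th root of unity, $T_n(q)$ the Taft algebra and $A$ a unital associative $\Bbbk$-algebra. Let $\cdot:T_n(q)\otimes A\to A$ be a linear map with $g\cdot1_A\in\{0,1_A\}$, and suppose there exists $k\in\{2,\dots,n-1\}$ such that $g^k\cdot a=a$ for all $a\in A$. Then $\cdot$ is a partial action of $T_n(q)$ on $A$ if and only if either $\cdot$ is a global action, or the restriction of $\cdot$ to $\Bbbk C_n\otimes A$ is a partial action of $\Bbbk C_n$ on $A$ with $g\cdot1_A=0$ and $g^ix^j\cdot a=\delta_{j,0}(g^i\cdot a)$ for all $0\le i,j\le n-1$ and $a\in A$.
   Context: The Taft algebra $T_n(q)$ is the Hopf algebra generated by $g,x$ with relations $g^n=1$, $x^n=0$, $xg=qgx$, basis $\{g^ix^j\}$, $g$ group-like, $\Delta(x)=x\otimes1+g\otimes x$, $\varepsilon(x)=0$; $\Bbbk C_n=\mathrm{span}\{1,g,\dots,g^{n-1}\}$. $\delta$ is the Kronecker delta. A partial action of a bialgebra $H$ on $A$ is a linear map $\cdot:H\otimes A\to A$ with $1_H\cdot a=a$, $h\cdot(ab)=(h_1\cdot a)(h_2\cdot b)$, $h\cdot(k\cdot a)=(h_1\cdot1_A)(h_2k\cdot a)$; it is global if moreover $h\cdot1_A=\varepsilon(h)1_A$ for all $h$. *)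

(* Defs.v *)
From HB Require Import structures.
From mathcomp Require Import all_boot all_order all_algebra.
Set Implicit Arguments. Unset Strict Implicit. Unset Printing Implicit Defensive.
Import GRing.Theory.
Local Open Scope ring_scope.

(* The Taft algebra T_n(q), presented through its PBW basis g^i x^j
   (0 <= i, j < n).  An element of
   T_n(q) (x) T_n(q) is a coefficient function on pairs of basis indices. *)

Section Taft.
Variables (K : fieldType) (n : nat) (q : K).

Definition tidx := ('I_n * 'I_n)%type.
Definition taft := tidx -> K.
Definition taft2 := tidx -> tidx -> K.

(* basis element g^i x^j for arbitrary natural i, j, using g^n = 1
   (so i is read mod n) and x^n = 0 (so it is 0 when j >= n) *)
Definition tb (i j : nat) : taft :=
  fun p => (((p.1 : nat) == (i %% n)%N) && ((p.2 : nat) == j))%:R.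

Definition tbas (p : tidx) : taft := tb p.1 p.2.

(* multiplication, bilinear extension of
   (g^i x^j)(g^k x^l) = q^(j k) g^(i+k) x^(j+l)   (from x g = q g x) *)
Definition tmul (h h' : taft) : taft :=
  fun r => \sum_(p : tidx) \sum_(p' : tidx)
     h p * h' p' * q ^+ (p.2 * p'.1) * tb (p.1 + p'.1) (p.2 + p'.2) r.

Definition tone : taft := tb 0 0.

(* counit: eps(g) = 1, eps(x) = 0, so eps(g^i x^j) = delta_{j,0} *)
Definition teps (h : taft) : K := \sum_(p : tidx) h p * ((p.2 : nat) == 0%N)%:R.

Definition tt_pure (h h' : taft) : taft2 := fun r s => h r * h' s.
Definition tt_add (u v : taft2) : taft2 := fun r s => u r s + v r s.
Definition tt_mul (u v : taft2) : taft2 :=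
  fun r s => \sum_(p1 : tidx) \sum_(p2 : tidx) \sum_(p3 : tidx) \sum_(p4 : tidx)
     u p1 p2 * v p3 p4 * tmul (tbas p1) (tbas p3) r * tmul (tbas p2) (tbas p4) s.

(* comultiplication: the algebra map with Delta(g) = g (x) g and
   Delta(x) = x (x) 1 + g (x) x; so Delta(g^i x^j) = Delta(g)^i Delta(x)^j *)
Definition Delta_g : taft2 := tt_pure (tb 1 0) (tb 1 0).
Definition Delta_x : taft2 := tt_add (tt_pure (tb 0 1) (tb 0 0)) (tt_pure (tb 1 0) (tb 0 1)).
Definition Delta_b (p : tidx) : taft2 :=
  iter p.1 (tt_mul Delta_g) (iter p.2 (tt_mul Delta_x) (tt_pure tone tone)).
Definition Delta (h : taft) : taft2 :=
  fun r s => \sum_(p : tidx) h p * Delta_b p r s.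

Definition in_kCn (h : taft) : Prop := forall p : tidx, (p.2 : nat) != 0%N -> h p = 0.

Variable (A : algType K).

(* A linear map T_n(q) (x) A -> A is determined by the linear maps
   act p = (g^i x^j) . _ , p = (i, j); hact h a is its value on h (x) a. *)
Definition hact (act : tidx -> A -> A) (h : taft) (a : A) : A :=
  \sum_(p : tidx) h p *: act p a.

(* partial action axioms, with h, k ranging over the elements satisfying P
   (P = all of T_n(q), or the sub-bialgebra k C_n) *)
Definition is_partial_action_on (P : taft -> Prop) (act : tidx -> A -> A) : Prop :=
  [/\ forall a : A, hact act tone a = a,
      forall h, P h -> forall a b : A,
        hact act h (a * b) =
        \sum_(r : tidx) \sum_(s : tidx) Delta h r s *: (act r a * act s b)
    & forall h k, P h -> P k -> forall a : A,
        hact act h (hact act k a) =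
        \sum_(r : tidx) \sum_(s : tidx)
           Delta h r s *: (act r 1 * hact act (tmul (tbas s) k) a)].

Definition is_partial_action (act : tidx -> A -> A) : Prop :=
  is_partial_action_on (fun _ => True) act.

Definition is_global_action (act : tidx -> A -> A) : Prop :=
  is_partial_action act /\ forall h, hact act h 1 = teps h *: 1.

Definition is_partial_action_kCn (act : tidx -> A -> A) : Prop :=
  is_partial_action_on in_kCn act.

End Taft.
Arguments tb {K} n i j p.

(* Main.v *)
Require Import Defs.
From HB Require Import structures.
From mathcomp Require Import all_boot all_order all_algebra.
From mathcomp Require Import ring zify.
From Stdlib Require Import FunctionalExtensionality.
Set Implicit Arguments. Unset Strict Implicit. Unset Printing Implicit Defensive.
Import GRing.Theory.
Local Open Scope ring_scope.

Section Basics.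
Variables (K : fieldType) (n' : nat) (q : K).
Local Notation n := n'.+1.
Local Notation tidx := (tidx n).

Definition ij (i j : nat) : tidx := (inord i, inord j).

Lemma ij_val (i j : nat) : (i < n)%N -> (j < n)%N ->
  ((ij i j).1 : nat) = i /\ ((ij i j).2 : nat) = j.
Proof. by move=> hi hj; rewrite /= !inordK. Qed.

Lemma tb_ij (i j : nat) (r : tidx) : (j < n)%N ->
  tb n i j r = (r == ij (i %% n) j)%:R :> K.
Proof.
move=> hj; case: r => r1 r2; rewrite /tb /ij xpair_eqE -!val_eqE /= !inordK //.
by rewrite ltn_pmod.
Qed.

Lemma tb_big (i j : nat) (r : tidx) : (n <= j)%N -> tb n i j r = 0 :> K.
Proof.
move=> hj; rewrite /tb; have -> : ((r.2 : nat) == j) = false.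
  by apply/negbTE; rewrite neq_ltn (leq_trans (ltn_ord _) hj).
by rewrite andbF.
Qed.

Lemma tbasE (p r : tidx) : tbas K p r = (r == p)%:R.
Proof.
case: p r => p1 p2 [r1 r2].
by rewrite /tbas /tb xpair_eqE /= (modn_small (ltn_ord _)) !val_eqE.
Qed.

Lemma sum_tbZ (V : lmodType K) (i j : nat) (F : tidx -> V) :
  \sum_r tb n i j r *: F r = if (j < n)%N then F (ij (i %% n) j) else 0.
Proof.
case: ltnP => hj.
  rewrite (bigD1 (ij (i %% n) j)) //= tb_ij // eqxx scale1r big1 ?addr0 //.
  by move=> r /negbTE hr; rewrite tb_ij // hr scale0r.
by rewrite big1 // => r _; rewrite tb_big // scale0r.
Qed.

Lemma sum_tbM (i j : nat) (F : tidx -> K) :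
  \sum_r tb n i j r * F r = if (j < n)%N then F (ij (i %% n) j) else 0.
Proof.
case: ltnP => hj.
  rewrite (bigD1 (ij (i %% n) j)) //= tb_ij // eqxx mul1r big1 ?addr0 //.
  by move=> r /negbTE hr; rewrite tb_ij // hr mul0r.
by rewrite big1 // => r _; rewrite tb_big // mul0r.
Qed.

Lemma sum_deltaM (p : tidx) (F : tidx -> K) :
  \sum_r (r == p)%:R * F r = F p.
Proof.
rewrite (bigD1 p) //= eqxx mul1r big1 ?addr0 //.
by move=> r /negbTE hr; rewrite hr mul0r.
Qed.

Lemma tmul_bas (p1 p3 r : tidx) :
  tmul q (tbas K p1) (tbas K p3) r =
  q ^+ (p1.2 * p3.1) * tb n (p1.1 + p3.1) (p1.2 + p3.2) r.
Proof.
rewrite /tmul.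
under eq_bigr do under eq_bigr do rewrite !tbasE -!mulrA.
rewrite (eq_bigr (fun p => (p == p1)%:R * (q ^+ (p.2 * p3.1) * tb n (p.1 + p3.1) (p.2 + p3.2) r))).
  by rewrite sum_deltaM.
by move=> p _; rewrite -mulr_sumr sum_deltaM.
Qed.

Lemma tmul_ext (u u' v v' : taft K n) r :
  (forall p, u p = u' p) -> (forall p, v p = v' p) -> tmul q u v r = tmul q u' v' r.
Proof.
move=> hu hv; rewrite /tmul; apply: eq_bigr => p _; apply: eq_bigr => p' _.
by rewrite hu hv.
Qed.

Lemma ij1 (i j : nat) : (i < n)%N -> ((ij i j).1 : nat) = i.
Proof. by move=> hi; rewrite /= inordK. Qed.
Lemma ij2 (i j : nat) : (j < n)%N -> ((ij i j).2 : nat) = j.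
Proof. by move=> hi; rewrite /= inordK. Qed.

Lemma tb_mod (i j : nat) r : tb n (i %% n) j r = tb n i j r :> K.
Proof. by rewrite /tb modn_mod. Qed.

Lemma tb_bas (i j : nat) p : (j < n)%N -> tb n i j p = tbas K (ij (i %% n) j) p.
Proof. by move=> hj; rewrite tb_ij // tbasE. Qed.

Lemma tmul_tb (i j k l : nat) r :
  tmul q (tb n i j) (tb n k l) r = q ^+ (j * (k %% n)) * tb n (i + k) (j + l) r.
Proof.
case: (ltnP j n) => hj; last first.
  rewrite tb_big ?mulr0 ?(leq_trans hj (leq_addr _ _)) //.
  by rewrite /tmul big1 // => p _; rewrite big1 // => p' _; rewrite tb_big // !mul0r.
case: (ltnP l n) => hl; last first.
  rewrite tb_big ?mulr0 ?(leq_trans hl (leq_addl _ _)) //.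
  by rewrite /tmul big1 // => p _; rewrite big1 // => p' _; rewrite (tb_big _ _ hl) !(mul0r, mulr0).
have hin : (i %% n < n)%N by rewrite ltn_pmod.
have hkn : (k %% n < n)%N by rewrite ltn_pmod.
rewrite (tmul_ext (u' := tbas K (ij (i %% n) j)) (v' := tbas K (ij (k %% n) l))); 
  last 2 first.
- by move=> p; rewrite tb_bas.
- by move=> p; rewrite tb_bas.
rewrite tmul_bas ij1 // ij2 // ij1 // ij2 //.
by rewrite /tb modnDm.
Qed.


Lemma tmul_exp (u u' : taft K n) r :
  tmul q u u' r = \sum_p1 \sum_p3 u p1 * u' p3 * tmul q (tbas K p1) (tbas K p3) r.
Proof.
by rewrite [LHS]/tmul; apply: eq_bigr => p1 _; apply: eq_bigr => p3 _; rewrite tmul_bas !mulrA.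
Qed.

Lemma tt_mul_pure (u v u' v' : taft K n) r s :
  tt_mul q (tt_pure u v) (tt_pure u' v') r s = tmul q u u' r * tmul q v v' s.
Proof.
rewrite (tmul_exp u) (tmul_exp v) /tt_mul /tt_pure big_distrl; apply: eq_bigr => p1 _.
rewrite big_distrl exchange_big; apply: eq_bigr => p3 _.
rewrite big_distrr; apply: eq_bigr => p2 _.
rewrite big_distrr; apply: eq_bigr => p4 _ /=; ring.
Qed.

Lemma tt_mul_addl (u v w : taft2 K n) :
  tt_mul q (tt_add u v) w = tt_add (tt_mul q u w) (tt_mul q v w).
Proof.
apply: functional_extensionality => r; apply: functional_extensionality => s.
rewrite /tt_mul /tt_add -big_split; apply: eq_bigr => p1 _.
rewrite -big_split; apply: eq_bigr => p2 _.
rewrite -big_split; apply: eq_bigr => p3 _.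
rewrite -big_split; apply: eq_bigr => p4 _ /=; ring.
Qed.

Lemma tt_mul_addr (u v w : taft2 K n) :
  tt_mul q w (tt_add u v) = tt_add (tt_mul q w u) (tt_mul q w v).
Proof.
apply: functional_extensionality => r; apply: functional_extensionality => s.
rewrite /tt_mul /tt_add -big_split; apply: eq_bigr => p1 _.
rewrite -big_split; apply: eq_bigr => p2 _.
rewrite -big_split; apply: eq_bigr => p3 _.
rewrite -big_split; apply: eq_bigr => p4 _ /=; ring.
Qed.

Lemma mulDg (a b c d : nat) :
  tt_mul q (@Delta_g K n) (tt_pure (tb n a b) (tb n c d)) =
  tt_pure (tb n (1 + a) b) (tb n (1 + c) d).
Proof.
apply: functional_extensionality => r; apply: functional_extensionality => s.
by rewrite /Delta_g tt_mul_pure !tmul_tb !mul0n expr0 !mul1r.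
Qed.

Lemma iterDg (m a b c d : nat) :
  iter m (tt_mul q (@Delta_g K n)) (tt_pure (tb n a b) (tb n c d)) =
  tt_pure (tb n (m + a) b) (tb n (m + c) d).
Proof. by elim: m => [|m IH] //=; rewrite IH mulDg !add1n !addSn. Qed.

Lemma iter_add (m : nat) (u v : taft2 K n) :
  iter m (tt_mul q (@Delta_g K n)) (tt_add u v) =
  tt_add (iter m (tt_mul q (@Delta_g K n)) u) (iter m (tt_mul q (@Delta_g K n)) v).
Proof. by elim: m => [|m IH] //=; rewrite IH tt_mul_addr. Qed.

Lemma Db0 (i : nat) : (i < n)%N ->
  Delta_b q (ij i 0) = tt_pure (tb n i 0) (tb n i 0).
Proof. by move=> hi; rewrite /Delta_b ij1 // ij2 //= /tone iterDg !addn0. Qed.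

Lemma Db1 (i : nat) : (1 < n)%N -> (i < n)%N ->
  Delta_b q (ij i 1) =
  tt_add (tt_pure (tb n i 1) (tb n i 0)) (tt_pure (tb n (i + 1) 0) (tb n i 1)).
Proof.
move=> h1 hi; rewrite /Delta_b ij1 // ij2 //= /Delta_x tt_mul_addl /tone.
have E : forall a b c d : nat, tt_mul q (tt_pure (tb n a b) (tb n c d)) (tt_pure (tb n 0 0) (tb n 0 0))
   = tt_pure (tb n a b) (tb n c d).
  move=> a b c d; apply: functional_extensionality => r; apply: functional_extensionality => s.
  by rewrite tt_mul_pure !tmul_tb !mod0n !muln0 expr0 !mul1r !addn0.
by rewrite !E iter_add !iterDg !addn0 addnC.
Qed.


Definition homog (d : nat) (u : taft2 K n) :=
  forall r s : tidx, ((r.2 : nat) + s.2 != d)%N -> u r s = 0.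

Lemma tmul_bas0 (p1 p3 r : tidx) : ((r.2 : nat) != p1.2 + p3.2)%N ->
  tmul q (tbas K p1) (tbas K p3) r = 0.
Proof. by move=> h; rewrite tmul_bas /tb (negbTE h) andbF mulr0. Qed.

Lemma homog_mul a b u v : homog a u -> homog b v -> homog (a + b) (tt_mul q u v).
Proof.
move=> hu hv r s hrs; rewrite /tt_mul big1 // => p1 _; rewrite big1 // => p2 _.
rewrite big1 // => p3 _; rewrite big1 // => p4 _.
have [e1|/hu->] := eqVneq (p1.2 + p2.2)%N a; last by rewrite !mul0r.
have [e2|/hv->] := eqVneq (p3.2 + p4.2)%N b; last by rewrite !(mul0r, mulr0).
have [e3|/tmul_bas0->] := eqVneq (r.2 : nat) (p1.2 + p3.2)%N; last by rewrite !(mul0r, mulr0).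
have [e4|/tmul_bas0->] := eqVneq (s.2 : nat) (p2.2 + p4.2)%N; last by rewrite !(mul0r, mulr0).
by exfalso; move/eqP: hrs; apply; lia.
Qed.

Lemma homog_pure a b c d : homog (b + d) (tt_pure (tb n a b) (tb n c d)).
Proof.
move=> r s hrs; rewrite /tt_pure /tb.
have [e1|e1] := eqVneq (r.2 : nat) b; last by rewrite andbF mul0r.
have [e2|e2] := eqVneq (s.2 : nat) d; last by rewrite andbF mulr0.
by rewrite e1 e2 eqxx in hrs.
Qed.

Lemma homog_add d u v : homog d u -> homog d v -> homog d (tt_add u v).
Proof. by move=> hu hv r s h; rewrite /tt_add hu ?hv ?addr0. Qed.

Lemma homog_Db (p : tidx) : homog p.2 (Delta_b q p).
Proof.
rewrite /Delta_b; elim: (p.1 : nat) => [|m IH] /=.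
  elim: (p.2 : nat) => [|j IHj] /=; first exact: (@homog_pure 0 0 0 0).
  rewrite -add1n; apply: homog_mul => //.
  by apply: homog_add; [apply: (@homog_pure 0 1 0 0) | apply: (@homog_pure 1 0 0 1)].
rewrite -(add0n p.2); apply: homog_mul => //; exact: (@homog_pure 1 0 1 0).
Qed.

Definition proj (h : taft K n) : taft K n :=
  fun p => if (p.2 : nat) == 0%N then h p else 0.

Lemma proj_kCn h : in_kCn (proj h).
Proof. by move=> p hp; rewrite /proj (negbTE hp). Qed.

Lemma Delta_proj h (r s : tidx) : (r.2 : nat) = 0%N -> (s.2 : nat) = 0%N ->
  Delta q h r s = Delta q (proj h) r s.
Proof.
move=> e1 e2; rewrite /Delta; apply: eq_bigr => p _; rewrite /proj.
case: eqP => // /eqP hp.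
by rewrite homog_Db ?mulr0 // e1 e2 eq_sym.
Qed.

Lemma tmul_proj (u v : taft K n) (r : tidx) : (r.2 : nat) = 0%N ->
  tmul q u v r = tmul q (proj u) (proj v) r.
Proof.
move=> e; rewrite /tmul; apply: eq_bigr => p _; apply: eq_bigr => p' _.
rewrite /proj; case: eqP => e1; case: eqP => e2 //;
  rewrite /tb e (eq_sym 0%N) addn_eq0;
  try (move/eqP/negbTE: e1 => ->); try (move/eqP/negbTE: e2 => ->);
  by rewrite /= ?andbF !mulr0.
Qed.


Section Act.
Variables (A : algType K) (af : tidx -> A -> A).

Definition Aa (i j : nat) (a : A) := hact af (tb n i j) a.

Lemma hact_tb i j a : Aa i j a = if (j < n)%N then af (ij (i %% n) j) a else 0.
Proof. by rewrite /Aa /hact sum_tbZ. Qed.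

Lemma af_ij i j a : (j < n)%N -> af (ij (i %% n) j) a = Aa i j a.
Proof. by move=> hj; rewrite hact_tb hj. Qed.

Lemma Aa_modD i l j a : Aa (i %% n + l) j a = Aa (i + l) j a.
Proof. by rewrite !hact_tb modnDml. Qed.

Lemma Aa_mod i j a : Aa (i %% n) j a = Aa i j a.
Proof. by rewrite !hact_tb modn_mod. Qed.

Lemma Delta_tb i j r s : (j < n)%N -> Delta q (tb n i j) r s = Delta_b q (ij (i %% n) j) r s.
Proof. by move=> hj; rewrite /Delta sum_tbM hj. Qed.

Lemma sum_pure a b c d (F : tidx -> tidx -> A) : (b < n)%N -> (d < n)%N ->
  \sum_r \sum_s tt_pure (tb n a b) (tb n c d) r s *: F r s
  = F (ij (a %% n) b) (ij (c %% n) d).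
Proof.
move=> hb hd.
rewrite (eq_bigr (fun r => tb n a b r *: F r (ij (c %% n) d))); first by rewrite sum_tbZ hb.
move=> r _; rewrite /tt_pure.
under eq_bigr do rewrite -scalerA.
by rewrite -scaler_sumr sum_tbZ hd.
Qed.

Lemma sum_add (u v : taft2 K n) (F : tidx -> tidx -> A) :
  \sum_r \sum_s tt_add u v r s *: F r s
  = \sum_r \sum_s u r s *: F r s + \sum_r \sum_s v r s *: F r s.
Proof.
rewrite -big_split; apply: eq_bigr => r _; rewrite -big_split; apply: eq_bigr => s _.
by rewrite /tt_add scalerDl.
Qed.

Lemma hact_tmul c d l m a : (c < n)%N -> (d < n)%N ->
  hact af (tmul q (tbas K (ij c d)) (tb n l m)) a = q ^+ (d * (l %% n)) *: Aa (c + l) (d + m) a.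
Proof.
move=> hc hd; rewrite /Aa /hact scaler_sumr; apply: eq_bigr => p _.
rewrite (tmul_ext (u' := tb n c d) (v' := tb n l m)) //; last first.
  by move=> p'; rewrite tb_bas // modn_small.
by rewrite tmul_tb scalerA.
Qed.

Hypothesis PA : is_partial_action q af.

Lemma ax1 a : Aa 0 0 a = a.
Proof. by case: PA => H1 _ _; exact: H1. Qed.

Lemma sum_Delta i j (F : tidx -> tidx -> A) : (j < n)%N ->
  \sum_r \sum_s Delta q (tb n i j) r s *: F r s =
  \sum_r \sum_s Delta_b q (ij (i %% n) j) r s *: F r s.
Proof.
by move=> hj; apply: eq_bigr => r _; apply: eq_bigr => s _; rewrite Delta_tb.
Qed.

Lemma ax3g i l m a : Aa i 0 (Aa l m a) = Aa i 0 1 * Aa (i + l) m a.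
Proof.
case: PA => _ _ H3; rewrite /Aa H3 // sum_Delta // Db0 ?ltn_pmod //.
rewrite sum_pure // hact_tmul ?ltn_pmod // mul0n expr0 scale1r add0n.
by rewrite modn_mod af_ij // Aa_modD.
Qed.

Lemma ax3x i l m a : (1 < n)%N ->
  Aa i 1 (Aa l m a) = Aa i 1 1 * Aa (i + l) m a
                      + Aa (i + 1) 0 1 * (q ^+ (l %% n) *: Aa (i + l) m.+1 a).
Proof.
move=> h1; case: PA => _ _ H3; rewrite /Aa H3 // sum_Delta // Db1 ?ltn_pmod //.
rewrite sum_add !sum_pure // !hact_tmul ?ltn_pmod // mul0n expr0 scale1r add0n mul1n add1n.
by rewrite !modn_mod !af_ij // !Aa_modD.
Qed.


Lemma af_p (p : tidx) a : af p a = Aa p.1 p.2 a.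
Proof.
rewrite hact_tb ltn_ord modn_small //; congr (af _ a).
by case: p => p1 p2; rewrite /ij !inord_val.
Qed.

Lemma hact_ext0 (h h' : taft K n) (a : A) :
  (forall (p : tidx) (a : A), (p.2 : nat) != 0%N -> af p a = 0) ->
  (forall p : tidx, (p.2 : nat) = 0%N -> h p = h' p) -> hact af h a = hact af h' a.
Proof.
move=> Hx hh; rewrite /hact; apply: eq_bigr => p _.
have [e|e] := eqVneq (p.2 : nat) 0%N; first by rewrite hh.
by rewrite Hx // !scaler0.
Qed.

Lemma back (Hkc : is_partial_action_kCn q af)
  (Hx : forall (p : tidx) (a : A), (p.2 : nat) != 0%N -> af p a = 0) : is_partial_action q af.
Proof.
have hproj : forall h a, hact af h a = hact af (proj h) a.
  by move=> h a; apply: hact_ext0 => // p e; rewrite /proj e.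
have htx : forall (s : tidx) X a, (s.2 : nat) != 0%N -> hact af (tmul q (tbas K s) X) a = 0.
  move=> s X a hs; rewrite (@hact_ext0 _ (fun _ => 0)) //.
    by rewrite /hact big1 // => p _; rewrite scale0r.
  move=> p e; rewrite tmul_proj // /tmul big1 // => p1 _; rewrite big1 // => p2 _.
  rewrite /proj tbasE; case: eqP => e1; last by rewrite !mul0r.
  have -> : (p1 == s) = false.
    by apply/negbTE; apply: contra hs => /eqP <-; rewrite e1.
  by rewrite !mul0r.
case: Hkc => H1 H2 H3; split => //.
- move=> h0 _ a b; rewrite hproj H2; last exact: proj_kCn.
  apply: eq_bigr => r _; apply: eq_bigr => s _.
  have [e1|e1] := eqVneq (r.2 : nat) 0%N; last by rewrite Hx // !mul0r !scaler0.
  have [e2|e2] := eqVneq (s.2 : nat) 0%N; last by rewrite (Hx s) // !mulr0 !scaler0.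
  by rewrite -Delta_proj.
- move=> h0 k _ _ a; rewrite (hproj k) hproj H3; [|exact: proj_kCn..].
  apply: eq_bigr => r _; apply: eq_bigr => s _.
  have [e1|e1] := eqVneq (r.2 : nat) 0%N; last by rewrite Hx // !mul0r !scaler0.
  have [e2|e2] := eqVneq (s.2 : nat) 0%N; last by rewrite !htx // !mulr0 !scaler0.
  rewrite -Delta_proj //; congr (_ *: (_ * _)).
  apply: hact_ext0 => // p e.
  rewrite tmul_proj // [RHS]tmul_proj //; apply: tmul_ext => // p'.
  by rewrite /proj; case: eqP.
Qed.

Hypothesis Haf0 : forall p, af p 0 = 0.

Lemma Aa0 i j : Aa i j 0 = 0.
Proof. by rewrite hact_tb Haf0; case: ifP. Qed.

Lemma scale_inj0 (c : K) (v : A) : c != 0 -> c *: v = 0 -> v = 0.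
Proof. by move=> hc e; rewrite -[v]scale1r -(mulVf hc) -scalerA e scaler0. Qed.

Hypothesis h1 : (1 < n)%N.

Lemma glob (Hg : Aa 1 0 1 = 1) : forall p, af p 1 = ((p.2 : nat) == 0%N)%:R *: 1.
Proof.
have ga : forall i, Aa i 0 1 = 1.
  elim=> [|i IH]; first exact: ax1.
  by have := ax3g 1 i 0 1; rewrite IH Hg mul1r add1n => <-.
have x1 : Aa 0 1 1 = 0.
  have := ax3x 0 0 0 1 h1; rewrite ax1 mulr1 add0n Hg mod0n expr0 scale1r mul1r.
  by move/(congr1 (fun y => y - Aa 0 1 1)); rewrite subrr addrK.
have xj : forall j, Aa 0 j.+1 1 = 0.
  elim=> [|j IH]; first exact: x1.
  by have := ax3x 0 0 j.+1 1 h1; rewrite IH Aa0 x1 mul0r add0r add0n Hg mod0n expr0 scale1r mul1r.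
move=> [p1 [[|j] hj]] /=.
  by rewrite af_p ga scale1r.
by rewrite af_p /= scale0r; have := ax3g p1 0 j.+1 1; rewrite xj Aa0 ga mul1r addn0.
Qed.

Lemma xvanish k (hk : (2 <= k < n)%N) (Hk : forall a, Aa k 0 a = a) (hq : n.-primitive_root q) :
  forall i j a, Aa i j.+1 a = 0.
Proof.
have per : forall l m a, Aa (k + l) m a = Aa l m a.
  by move=> l m a; have := ax3g k l m a; rewrite Hk Hk mul1r.
have hN1 : Aa (n' + 1) 0 1 = 1 by rewrite addn1 -Aa_mod modnn ax1.
have E0 : forall a, Aa n' 1 1 * Aa n' 0 a = 0.
  move=> a; have := ax3x n' 0 0 a h1; rewrite ax1 !addn0 hN1 mod0n expr0 scale1r mul1r.
  by move/(congr1 (fun y => y - Aa n' 1 a)); rewrite subrr addrK.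
have Y0 : forall a, Aa n' 1 a = 0.
  move=> a; have := ax3x n' k 0 a h1; rewrite Hk addnC !per hN1 E0 add0r mul1r.
  case/andP: hk => hk2 hkn; rewrite modn_small // => E.
  apply: (@scale_inj0 (1 - q ^+ k)).
    rewrite subr_eq0 eq_sym -(expr0 q) (eq_prim_root_expr hq) mod0n modn_small //.
    by rewrite -lt0n (leq_trans _ hk2).
  by rewrite scalerBl scale1r -E subrr.
have q0 : q != 0.
  apply/eqP => e; move: (prim_expr_order hq); rewrite e expr0n /=.
  by move/eqP; rewrite eq_sym oner_eq0.
move=> i j a; have := ax3x n' i.+1 j a h1; rewrite !Y0 mul0r add0r hN1 mul1r.
move=> /esym /(scale_inj0 (expf_neq0 _ q0)) H.
have -> : Aa i j.+1 a = Aa (n' + i.+1) j.+1 a.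
  by rewrite -[RHS]Aa_mod addnS -addSn modnDl Aa_mod.
exact: H.
Qed.

End Act.

End Basics.

Theorem corollary3p13 (K : fieldType) (n : nat) (q : K) (A : algType K)
    (act : 'I_n * 'I_n -> {linear A -> A}) :
  (2 <= n)%N ->
  n.-primitive_root q ->
  (hact (fun p => act p) (tb n 1 0) 1 = 0 \/ hact (fun p => act p) (tb n 1 0) 1 = 1) ->
  (exists k : nat, (2 <= k < n)%N /\
     forall a : A, hact (fun p => act p) (tb n k 0) a = a) ->
  (is_partial_action q (fun p => act p) <->
   (is_global_action q (fun p => act p) \/
    [/\ is_partial_action_kCn q (fun p => act p),
        hact (fun p => act p) (tb n 1 0) 1 = 0
      & forall (i j : nat) (a : A), (i < n)%N -> (j < n)%N ->
          hact (fun p => act p) (tb n i j) a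
          = (j == 0%N)%:R *: hact (fun p => act p) (tb n i 0) a])).
Proof.
move=> hn hq Hg1 [k [hk Hk]].
destruct n as [|n']; first by [].
have Haf0 : forall p, (fun p => act p : A -> A) p 0 = 0 by move=> p /=; rewrite linear0.
have h1 : (1 < n'.+1)%N by [].
split.
- move=> PA; case: Hg1 => Hg.
  + right; split => //.
    * case: PA => H1 H2 H3; split => //; [move=> h _; exact: H2 | move=> h k0 _ _; exact: H3].
    * move=> i [|j] a hi hj; first by rewrite scale1r.
      rewrite scale0r; exact: (@xvanish K n' q A (fun p => act p) PA h1 k hk Hk hq i j a).
  + left; split => // h.
    rewrite /hact /teps scaler_suml; apply: eq_bigr => p _.
    by rewrite (glob PA Haf0 h1 Hg) scalerA.
- case => [[PA _] | [Hkc Hg Hx]]; first exact: PA.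
  apply: back => // p a hp.
  rewrite (@af_p K n' A (fun p => act p) p a); have := Hx p.1 p.2 a (ltn_ord _) (ltn_ord _).
  by rewrite (negbTE hp) scale0r.
Qed.
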